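(* The map $B\mapsto I(B)$, sending a bridge (a nondecreasing càdlàg function $[0,1]\to[0,1]$ of the bridge form) to its interval-partition, is continuous when bridges are endowed with the Skorohod topology and interval-partitions with the Hausdorff distance between complements $d_H$.
   Context: A bridge is a function $B:[0,1]\to[0,1]$ of the form $B(x)=x(1-\sum_i\beta_i)+\sum_i\beta_i\mathbf 1_{\{v_i\le x\}}$ with $\beta_1\ge\beta_2\ge\dots\ge0$, $\sum\beta_i\le1$, and $v_i\in[0,1]$. $I(B)=\operatorname{int}([0,1]\setminus B([0,1]))$, where $B([0,1])$ is the range of $B$. For open subsets $I,\tilde I$ of $(0,1)$, $d_H(I,\tilde I)=\sup_{x\notin I}d(x,[0,1]\setminus\tilde I)\vee\sup_{x\notin\tilde I}d(x,[0,1]\setminus I)$ (complements taken in $[0,1]$). *)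

(* Defs.v *)
From Stdlib Require Import Reals Lra.
Open Scope R_scope.

Definition unit_int (x : R) : Prop := 0 <= x <= 1.

Definition ind_le (v x : R) : R := if Rle_dec v x then 1 else 0.

(* B is a bridge:  B(x) = x(1 - sum beta_i) + sum_i beta_i 1_{v_i <= x}  on [0,1],
   with beta_1 >= beta_2 >= ... >= 0, sum beta_i <= 1, v_i in [0,1].
   (Finitely many atoms are covered by beta_i = 0 eventually.) *)
Definition is_bridge (B : R -> R) : Prop :=
  exists (beta v : nat -> R) (Sb : R),
    (forall i, 0 <= beta i) /\
    (forall i, beta (S i) <= beta i) /\
    infinite_sum beta Sb /\ Sb <= 1 /\
    (forall i, unit_int (v i)) /\
    (forall x, unit_int x ->
       infinite_sum (fun i => beta i * ind_le (v i) x) (B x - x * (1 - Sb))).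

Definition range01 (B : R -> R) (y : R) : Prop := exists x, unit_int x /\ B x = y.

Definition IB (B : R -> R) (y : R) : Prop :=
  exists r, 0 < r /\ forall z, Rabs (z - y) < r -> unit_int z /\ ~ range01 B z.

Definition compl01 (I : R -> Prop) (x : R) : Prop := unit_int x /\ ~ I x.

Definition dist_le (x : R) (S : R -> Prop) (e : R) : Prop :=
  forall eta, 0 < eta -> exists y, S y /\ Rabs (x - y) < e + eta.

Definition dH_le (I J : R -> Prop) (e : R) : Prop :=
  (forall x, compl01 I x -> dist_le x (compl01 J) e) /\
  (forall x, compl01 J x -> dist_le x (compl01 I) e).

Definition homeo01 (l : R -> R) : Prop :=
  l 0 = 0 /\ l 1 = 1 /\
  (forall x y, unit_int x -> unit_int y -> x < y -> l x < l y) /\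
  (forall x, unit_int x -> continuity_pt l x).

Definition skorohod_le (f g : R -> R) (d : R) : Prop :=
  forall eta, 0 < eta -> exists l, homeo01 l /\
    forall x, unit_int x ->
      Rabs (l x - x) <= d + eta /\ Rabs (f x - g (l x)) <= d + eta.

(* Main.v *)
Require Import Defs.
From Stdlib Require Import Reals.
From Stdlib Require Import Lra Ranalysis5 Classical.
Open Scope R_scope.

Lemma cv0 : Un_cv (fun _ : nat => 0) 0.
Proof. intros e He; exists 0%nat; intros; unfold R_dist; rewrite Rminus_diag, Rabs_R0; lra. Qed.

Lemma bridge_unit (B : R -> R) : is_bridge B -> forall x, unit_int x -> unit_int (B x).
Proof.
  intros [beta [v [Sb [H0 [_ [Hs [HS1 [_ HB]]]]]]]] x Hx.
  pose proof (HB x Hx) as Hg.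
  set (g := fun i => beta i * ind_le (v i) x) in Hg.
  assert (Hg0 : forall i, 0 <= g i).
  { intro i; unfold g, ind_le; destruct (Rle_dec (v i) x); specialize (H0 i); nra. }
  assert (Hgb : forall i, g i <= beta i).
  { intro i; unfold g, ind_le; destruct (Rle_dec (v i) x); specialize (H0 i); nra. }
  assert (A1 : 0 <= B x - x * (1 - Sb)).
  { apply (@Rle_cv_lim (fun _ => 0) (sum_f_R0 g) 0); [intro; apply cond_pos_sum; auto | apply cv0 | exact Hg]. }
  assert (A2 : B x - x * (1 - Sb) <= Sb).
  { apply (@Rle_cv_lim (sum_f_R0 g) (sum_f_R0 beta) (B x - x * (1 - Sb)) Sb); [intro; apply sum_Rle; auto | exact Hg | exact Hs]. }
  unfold unit_int in *. nra.
Qed.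

Lemma homeo_surj (l : R -> R) : homeo01 l -> forall w, unit_int w -> exists x, unit_int x /\ l x = w.
Proof.
  intros [L0 [L1 [_ Lc]]] w [Hw0 Hw1].
  destruct (Req_dec w 0) as [->|n0]. { exists 0; split; [unfold unit_int; lra | auto]. }
  destruct (Req_dec w 1) as [->|n1]. { exists 1; split; [unfold unit_int; lra | auto]. }
  destruct (IVT_interv (fun t => l t - w) 0 1) as [z [Hz Hz2]].
  - intros a Ha. apply (continuity_pt_minus l (fun _ => w)). apply Lc; exact Ha.
    apply continuity_pt_const; intros u u'; reflexivity.
  - lra.
  - rewrite L0; lra.
  - rewrite L1; lra.
  - exists z; split; [exact Hz | lra].
Qed.

Lemma notIB_range (B : R -> R) y : range01 B y -> ~ IB B y.
Proof.
  intros Hr [r [Hr0 H]]. destruct (H y) as [_ H2]. rewrite Rminus_diag, Rabs_R0; lra. auto.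
Qed.

Lemma notIB_out (B : R -> R) y : (y = 0 \/ y = 1) -> ~ IB B y.
Proof.
  intros Hy [r [Hr0 H]]. destruct Hy as [->| ->].
  - destruct (H (- (r/2))) as [[U _] _]. rewrite Rminus_0_r, Rabs_Ropp, Rabs_right; lra. lra.
  - destruct (H (1 + r/2)) as [[_ U] _].
    replace (1 + r/2 - 1) with (r/2) by ring. rewrite Rabs_right; lra. lra.
Qed.

Lemma half (B B' : R -> R) (d : R) : 0 <= d ->
  (forall x, unit_int x -> unit_int (B' x)) ->
  (forall eta, 0 < eta -> forall x0, unit_int x0 -> exists w, unit_int w /\ Rabs (B x0 - B' w) <= d + eta) ->
  forall x, compl01 (IB B) x -> dist_le x (compl01 (IB B')) d.
Proof.
  intros Hd0 HB' Hm x [Hx HI] eta Heta.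
  set (r := eta / 2).
  destruct (classic (exists z, Rabs (z - x) < r /\ (~ unit_int z \/ range01 B z))) as [[z [Hz [Hu|Hr]]]|Hn].
  - unfold unit_int in Hu, Hx.
    destruct (Rlt_or_le z 0).
    + exists 0; split. split; [unfold unit_int; lra | apply notIB_out; auto].
      rewrite Rminus_0_r, Rabs_right by lra.
      rewrite Rabs_left in Hz by lra. unfold r in Hz. lra.
    + assert (z > 1) by (destruct (Rle_dec z 1); [exfalso; apply Hu; lra | lra]).
      exists 1; split. split; [unfold unit_int; lra | apply notIB_out; auto].
      rewrite Rabs_left1 by lra. rewrite Rabs_right in Hz by lra. unfold r in Hz. lra.
  - destruct Hr as [x0 [Hx0 <-]].
    destruct (Hm (eta/4) ltac:(lra) x0 Hx0) as [w [Hw Hd]].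
    exists (B' w). split.
    + split. apply HB'; auto. apply notIB_range. exists w; auto.
    + replace (x - B' w) with (- (B x0 - x) + (B x0 - B' w)) by ring.
      eapply Rle_lt_trans. apply Rabs_triang. rewrite Rabs_Ropp. unfold r in Hz. lra.
  - exfalso. apply HI. exists r. split. unfold r; lra.
    intros z Hz. split.
    + apply NNPP; intro Hu. apply Hn. exists z; auto.
    + intro Hr. apply Hn. exists z; auto.
Qed.

Theorem mainTheorem14 :
  forall B : R -> R, is_bridge B ->
  forall eps : R, 0 < eps ->
  exists delta : R, 0 < delta /\
    forall B' : R -> R, is_bridge B' ->
      skorohod_le B B' delta -> dH_le (IB B) (IB B') eps.
Proof.
  intros B HB eps Heps. exists eps. split; auto.
  intros B' HB' Hsk. split.
  - apply half. lra. apply bridge_unit; auto.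
    intros eta Heta x0 Hx0. destruct (Hsk eta Heta) as [l [Hl H]].
    exists (l x0). destruct Hl as [L0 [L1 [Lm _]]].
    split.
    + unfold unit_int in *.
      destruct (Req_dec x0 0) as [->|]. lra.
      destruct (Req_dec x0 1) as [->|]. lra.
      pose proof (Lm 0 x0 ltac:(unfold unit_int; lra) Hx0 ltac:(lra)).
      pose proof (Lm x0 1 Hx0 ltac:(unfold unit_int; lra) ltac:(lra)). lra.
    + apply H; auto.
  - apply half. lra. apply bridge_unit; auto.
    intros eta Heta w Hw. destruct (Hsk eta Heta) as [l [Hl H]].
    destruct (homeo_surj l Hl w Hw) as [x1 [Hx1 <-]].
    exists x1. split; auto. rewrite Rabs_minus_sym. apply H; auto.
Qed.
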